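(* Let $d,n\in\mathbb{N}$, let $\mathcal{P}$ be a unit hypercube partition of $\mathbb{R}^{d}$, and let $X_{1},\ldots,X_{n}\in\mathcal{P}$ be such that $X_i$ and $X_j$ are adjacent for all $i,j\in[n]$. Then there is a point $\vec{p}\in\mathbb{R}^{d}$ such that $\vec{p}\in\overline{X_{i}}$ for all $i\in[n]$.
   Context: A unit hypercube is a set $\vec{a}+[0,1)^d$ with $\vec{a}\in\mathbb{R}^d$; a unit hypercube partition is a partition of $\mathbb{R}^d$ all of whose members are unit hypercubes. $\overline{X}$ denotes closure; $X$ and $Y$ are adjacent if $\overline{X}\cap\overline{Y}\ne\emptyset$. *)

(* Defs.v *)
(* points of R^d are row vectors 'rV[R]_d over a
   realType R, with the library's (product/max-norm) topology. *)
From HB Require Import structures.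
From mathcomp Require Import all_boot all_order all_algebra.
From mathcomp Require Import all_classical all_reals all_analysis.
Set Implicit Arguments. Unset Strict Implicit. Unset Printing Implicit Defensive.
Import Order.TTheory GRing.Theory Num.Theory.
Import numFieldNormedType.Exports.
Local Open Scope classical_set_scope.
Local Open Scope ring_scope.

Definition unit_cube (R : realType) (d : nat) (a : 'rV[R]_d) : set 'rV[R]_d :=
  [set x | forall i : 'I_d, a 0 i <= x 0 i < a 0 i + 1].

Definition is_unit_cube (R : realType) (d : nat) (X : set 'rV[R]_d) : Prop :=
  exists a : 'rV[R]_d, X = unit_cube a.

Definition unit_cube_partition (R : realType) (d : nat)
    (P : set (set 'rV[R]_d)) : Prop :=
  [/\ (forall X, P X -> is_unit_cube X),
      (forall X, P X -> X !=set0),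
      (forall x : 'rV[R]_d, exists2 X, P X & X x) &
      (forall X Y, P X -> P Y -> X `&` Y !=set0 -> X = Y)].

Definition cube_adjacent (R : realType) (d : nat) (X Y : set 'rV[R]_d) : Prop :=
  closure X `&` closure Y !=set0.

(* Main.v *)
Require Import Defs.
From HB Require Import structures.
From mathcomp Require Import all_boot all_order all_algebra.
From mathcomp Require Import all_classical all_reals all_analysis.
From mathcomp Require Import lra.
Import Order.TTheory GRing.Theory Num.Theory.
Import numFieldNormedType.Exports.
Local Open Scope classical_set_scope.
Local Open Scope ring_scope.

Lemma ballmx (R : realType) d (x y : 'rV[R]_d) e :
  ball x e y <-> (0 < e /\ forall i j, ball (x i j) e (y i j)).
Proof. split; by []. Qed.

Lemma ballR (R : realType) (x y e : R) : ball x e y <-> `|x - y| < e.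
Proof. by rewrite -ball_normE. Qed.

Lemma closure_cube_sub (R : realType) d (a p : 'rV[R]_d) :
  closure (unit_cube a) p -> forall k, a 0 k <= p 0 k <= a 0 k + 1.
Proof.
move=> cl k; apply/andP; split; rewrite leNgt; apply/negP => H.
- have e0 : 0 < a 0 k - p 0 k by rewrite subr_gt0.
  have [x [/(_ k) /andP[h1 h2] /ballmx [_ /(_ 0 k) /ballR hb]]] :=
    cl _ (nbhsx_ballx p _ e0).
  move: hb; rewrite ltr_norml => /andP[hb _]; lra.
- have e0 : 0 < p 0 k - (a 0 k + 1) by rewrite subr_gt0.
  have [x [/(_ k) /andP[h1 h2] /ballmx [_ /(_ 0 k) /ballR hb]]] :=
    cl _ (nbhsx_ballx p _ e0).
  move: hb; rewrite ltr_norml => /andP[_ hb]; lra.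
Qed.

Lemma box_closure (R : realType) d (a p : 'rV[R]_d) :
  (forall k, a 0 k <= p 0 k <= a 0 k + 1) -> closure (unit_cube a) p.
Proof.
move=> hp B /nbhs_ballP [e e0 hB].
pose s := Num.min (e / 2) (1 / 2).
have s0 : 0 < s by rewrite lt_min !divr_gt0.
have se : s < e by rewrite gt_min ltr_pdivrMr // ltr_pMr // ltr1n.
have s1 : s <= 1 / 2 by rewrite ge_min lexx orbT.
pose x := \row_k (if p 0 k < a 0 k + 1 then p 0 k else p 0 k - s).
exists x; split.
- move=> k; rewrite mxE; case: ifP => hk.
    by move: (hp k) => /andP[-> _]; rewrite hk.
  move: (hp k) => /andP[h1 h2].
  have eq : p 0 k = a 0 k + 1 by apply/eqP; rewrite eq_le h2 leNgt hk.
  rewrite eq; apply/andP; split; lra.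
- apply: hB; apply/ballmx; split => // i j; apply/ballR.
  rewrite (ord1 i) mxE; case: ifP => _; first by rewrite subrr normr0.
  rewrite opprB addrC subrK gtr0_norm //.
Qed.

Theorem mainTheorem13 (R : realType) (d n : nat) (P : set (set 'rV[R]_d))
    (X : 'I_n -> set 'rV[R]_d) :
  unit_cube_partition P ->
  (forall i, P (X i)) ->
  (forall i j, cube_adjacent (X i) (X j)) ->
  exists p : 'rV[R]_d, forall i, closure (X i) p.
Proof.
move=> [hc _ _ _] hP hadj.
have /choice [a Ha] : forall i, exists a, X i = unit_cube a.
  by move=> i; exact: hc _ (hP i).
case: n X hP hadj a Ha => [|n] X hP hadj a Ha.
  by exists 0 => -[].
have near : forall i j k, a i 0 k <= a j 0 k + 1.
  move=> i j k; have [q [qi qj]] := hadj i j.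
  rewrite Ha in qi; rewrite Ha in qj.
  move: (@closure_cube_sub _ _ _ _ qi k) (@closure_cube_sub _ _ _ _ qj k) => /andP[h1 h2] /andP[h3 h4].
  lra.
pose m k := Order.arg_max ord0 xpredT (fun i => a i 0 k).
exists (\row_k a (m k) 0 k) => j; rewrite Ha; apply: box_closure => k.
rewrite mxE /m; case: arg_maxP => //= i _ hi.
by rewrite near hi.
Qed.
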